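(* Let $G$ be a $\sigma$-compact locally compact Abelian group and $\omega=\sum_{x\in\Gamma}\omega(x)\delta_x$ a concentrated weighted comb with $\|\omega\|_\infty<\infty$. Then $\omega$ is norm-almost periodic if and only if $\omega$ is sup-almost periodic.
   Context: $\|\omega\|_\infty:=\sup_x|\omega(\{x\})|$. Fix a compact $K\subset G$ with nonempty interior and set $\|\mu\|_K:=\sup_{t\in G}|\mu|(t+K)$; $T_t\mu(A)=\mu(A-t)$. A weighted comb $\omega$ is concentrated if for every $\varepsilon>0$ there is a set $\Lambda\subset G$ with finite local complexity ($\Lambda-\Lambda$ locally finite) such that $\|\omega-\omega|_\Lambda\|_K<\varepsilon$, where $\omega|_\Lambda=\sum_{x\in\Gamma\cap\Lambda}\omega(x)\delta_x$. Norm-almost periodic: $\{t:\|\omega-T_t\omega\|_K<\varepsilon\}$ relatively dense for all $\varepsilon>0$; sup-almost periodic: $\{t:\sup_x|\omega(\{t+x\})-\omega(\{x\})|<\varepsilon\}$ relatively dense for all $\varepsilon>0$. *)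

(* Defs.v *)
From Stdlib Require Import Reals List.
Open Scope R_scope.
Import ListNotations.

Definition Cx := (R * R)%type.
Definition Cminus (a b : Cx) : Cx := (fst a - fst b, snd a - snd b).
Definition Cmod (a : Cx) : R := sqrt (fst a * fst a + snd a * snd a).
Definition C0 : Cx := (0, 0).

Section Group.
Variable G : Type.
Variables (add : G -> G -> G) (opp : G -> G) (zero : G).
Variable open : (G -> Prop) -> Prop.

Definition abelian_group_axioms : Prop :=
  (forall x y z, add x (add y z) = add (add x y) z) /\
  (forall x y, add x y = add y x) /\
  (forall x, add x zero = x) /\
  (forall x, add x (opp x) = zero).

Definition topology_axioms : Prop :=
  open (fun _ => True) /\ open (fun _ => False) /\
  (forall U V, open U -> open V -> open (fun x => U x /\ V x)) /\
  (forall (I : Type) (U : I -> G -> Prop), (forall i, open (U i)) ->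
      open (fun x => exists i, U i x)).

Definition hausdorff : Prop :=
  forall x y, x <> y -> exists U V, open U /\ open V /\ U x /\ V y /\
     (forall z, U z -> V z -> False).

Definition add_continuous : Prop :=
  forall x y (U : G -> Prop), open U -> U (add x y) ->
    exists V W, open V /\ open W /\ V x /\ W y /\
      (forall v w, V v -> W w -> U (add v w)).

Definition opp_continuous : Prop :=
  forall x (U : G -> Prop), open U -> U (opp x) ->
    exists V, open V /\ V x /\ (forall v, V v -> U (opp v)).

Definition compact_set (K : G -> Prop) : Prop :=
  forall (I : Type) (U : I -> G -> Prop), (forall i, open (U i)) ->
    (forall x, K x -> exists i, U i x) ->
    exists l : list I, forall x, K x -> exists i, In i l /\ U i x.

Definition locally_compact : Prop :=
  forall x, exists U C, open U /\ compact_set C /\ U x /\ (forall y, U y -> C y).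

Definition sigma_compact : Prop :=
  exists Kn : nat -> G -> Prop, (forall n, compact_set (Kn n)) /\
    forall x, exists n, Kn n x.

Definition sigma_compact_LCA_group : Prop :=
  abelian_group_axioms /\ topology_axioms /\ hausdorff /\
  add_continuous /\ opp_continuous /\ locally_compact /\ sigma_compact.

Definition nonempty_interior (K : G -> Prop) : Prop :=
  exists U x, open U /\ U x /\ (forall y, U y -> K y).

Definition translate (t : G) (A : G -> Prop) : G -> Prop :=
  fun y => exists a, A a /\ y = add t a.

Definition finite_set (A : G -> Prop) : Prop :=
  exists l : list G, forall x, A x -> In x l.

Definition locally_finite (A : G -> Prop) : Prop :=
  forall C, compact_set C -> finite_set (fun x => A x /\ C x).

Definition FLC (L : G -> Prop) : Prop :=
  locally_finite (fun z => exists x y, L x /\ L y /\ z = add x (opp y)).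

Definition relatively_dense (S : G -> Prop) : Prop :=
  exists C, compact_set C /\ forall x, exists s c, S s /\ C c /\ x = add s c.

(* ---------- pure point measures given by weights w : G -> Cx ----------
   The measure is  sum_{x : w x <> 0} w(x) delta_x ; its support is Gamma. *)

Definition tv_le (w : G -> Cx) (A : G -> Prop) (c : R) : Prop :=
  forall l : list G, NoDup l -> (forall x, In x l -> A x) ->
    fold_right Rplus 0 (map (fun x => Cmod (w x)) l) <= c.

(* the sum defines a (Radon) measure: finite total variation on compacts *)
Definition weighted_comb (w : G -> Cx) : Prop :=
  forall C, compact_set C -> exists c, tv_le w C c.

(* ||w||_K < eps, where ||mu||_K = sup_t |mu|(t+K) *)
Definition normK_lt (K : G -> Prop) (w : G -> Cx) (eps : R) : Prop :=
  exists c, c < eps /\ forall t, tv_le w (translate t K) c.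

Definition sup_norm_finite (w : G -> Cx) : Prop :=
  exists M, forall x, Cmod (w x) <= M.

(* omega|_Lambda has weights w x on Lambda and 0 off Lambda; hence
   omega - omega|_Lambda has weights w x off Lambda and 0 on Lambda, and
   |omega - omega|_Lambda|(t+K) is the total variation of w over (t+K) \ Lambda. *)
Definition concentrated (K : G -> Prop) (w : G -> Cx) : Prop :=
  forall eps, 0 < eps -> exists L : G -> Prop, FLC L /\
    exists c, c < eps /\
      forall t, tv_le w (fun x => translate t K x /\ ~ L x) c.

(* T_t omega ({x}) = omega({x - t}) *)
Definition diff_translate (w : G -> Cx) (t : G) : G -> Cx :=
  fun x => Cminus (w x) (w (add x (opp t))).

Definition norm_almost_periodic (K : G -> Prop) (w : G -> Cx) : Prop :=
  forall eps, 0 < eps ->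
    relatively_dense (fun t => normK_lt K (diff_translate w t) eps).

Definition sup_almost_periodic (w : G -> Cx) : Prop :=
  forall eps, 0 < eps ->
    relatively_dense (fun t => exists c, c < eps /\
        forall x, Cmod (Cminus (w (add t x)) (w x)) <= c).
End Group.

(* Main.v *)
Require Import Defs.
From Stdlib Require Import Reals List Lra Lia FinFun ClassicalEpsilon.
From Coquelicot Require Complex.
Open Scope R_scope.
Import ListNotations.

Lemma Cmod_ge0 a : 0 <= Cmod a.
Proof. unfold Cmod; apply sqrt_pos. Qed.

Lemma Cmod_tri (a b : Cx) : Cmod (Cminus a b) <= Cmod a + Cmod b.
Proof.
  assert (E : forall x : Cx, Cmod x = Complex.Cmod x).
  { intros [x y]; unfold Cmod, Complex.Cmod; simpl; f_equal; ring. }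
  rewrite !E.
  replace (Cminus a b) with (Complex.Cplus a (Complex.Copp b)).
  2:{ destruct a, b; unfold Cminus, Complex.Cplus, Complex.Copp; simpl; f_equal; ring. }
  rewrite <- (Complex.Cmod_opp b). apply Complex.Cmod_triangle.
Qed.

Section GL.
Variables (G : Type) (add : G -> G -> G) (opp : G -> G) (zero : G).
Hypothesis Hax : abelian_group_axioms G add opp zero.

Lemma gA x y z : add x (add y z) = add (add x y) z. Proof. apply Hax. Qed.
Lemma gC x y : add x y = add y x. Proof. apply Hax. Qed.
Lemma g0 x : add x zero = x. Proof. apply Hax. Qed.
Lemma gV x : add x (opp x) = zero. Proof. apply Hax. Qed.

Lemma g_inv_uniq a b : add a b = zero -> b = opp a.
Proof.
  intro H. rewrite <- (g0 b), <- (gV a), gA, (gC b a), H, gC, g0. reflexivity.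
Qed.

Lemma g_opp_add a b : opp (add a b) = add (opp a) (opp b).
Proof.
  symmetry. apply g_inv_uniq.
  rewrite (gC (opp a) (opp b)), gA, <- (gA a b), gV, g0, gV. reflexivity.
Qed.

Lemma g_cancel a b : add (add a b) (opp a) = b.
Proof. rewrite (gC a b), <- gA, gV, g0. reflexivity. Qed.

Lemma g_cancel2 t x : add t (add x (opp t)) = x.
Proof. rewrite gA, (gC t x), <- gA, gV, g0. reflexivity. Qed.

Lemma g_diff s k1 k2 : add (add s k1) (opp (add s k2)) = add k1 (opp k2).
Proof.
  rewrite g_opp_add, (gC (opp s) (opp k2)), gA, <- (gA s k1 (opp k2)),
   (gC s), <- gA, gV, g0. reflexivity.
Qed.

Lemma g_inj_sub x0 y y' : add y (opp x0) = add y' (opp x0) -> y = y'.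
Proof.
  intro H. rewrite <- (g_cancel2 x0 y), <- (g_cancel2 x0 y'), H. reflexivity.
Qed.

Lemma g_shift s k t : add (add s k) (opp t) = add (add s (opp t)) k.
Proof. rewrite <- !gA, (gC k). reflexivity. Qed.

End GL.

Fixpoint inter {G A : Type} (W : A -> G -> Prop) (l : list A) : G -> Prop :=
  match l with [] => fun _ => True | q :: l => fun x => W q x /\ inter W l x end.

Lemma inter_open G (open : (G -> Prop) -> Prop) A (W : A -> G -> Prop) l :
  topology_axioms G open -> (forall q, open (W q)) -> open (inter W l).
Proof.
  intros Ht HW. induction l as [|q l IH]; simpl.
  - apply Ht.
  - apply Ht; auto.
Qed.

Lemma inter_spec G A (W : A -> G -> Prop) l x :
  inter W l x <-> forall q, In q l -> W q x.
Proof.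
  induction l as [|q l IH]; simpl.
  - split; tauto.
  - split.
    + intros [H1 H2] q' [<-|Hq]; auto. apply IH; auto.
    + intros H; split; auto. apply IH; auto.
Qed.

Lemma diff_compact G add opp (open : (G -> Prop) -> Prop) K :
  topology_axioms G open -> add_continuous G add open -> opp_continuous G opp open ->
  compact_set G open K ->
  compact_set G open (fun z => exists a b, K a /\ K b /\ z = add a (opp b)).
Proof.
  intros Ht Hadd Hopp HK I U HU Hcov.
  set (P2 := fun p : (G -> Prop) * list I => open (fst p) /\
     forall a w, K a -> fst p w -> exists i, In i (snd p) /\ U i (add a (opp w))).
  assert (Hstep : forall b, K b -> exists p, P2 p /\ fst p b).
  { intros b Kb.
    set (P1 := fun q : I * (G -> Prop) * (G -> Prop) =>
      open (snd (fst q)) /\ open (snd q) /\ snd q b /\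
      forall v w, snd (fst q) v -> snd q w -> U (fst (fst q)) (add v (opp w))).
    destruct (HK {q | P1 q} (fun j => snd (fst (proj1_sig j)))) as [l1 Hl1].
    - intros [q Hq]; apply Hq.
    - intros a Ka.
      destruct (Hcov (add a (opp b))) as [i Hi]. { exists a, b; auto. }
      destruct (Hadd a (opp b) (U i) (HU i) Hi) as [V [W' [HV [HW' [Va [Wb' HVW]]]]]].
      destruct (Hopp b W' HW' Wb') as [W [HW [Wb HWW]]].
      assert (Hq : P1 (i, V, W)).
      { unfold P1; simpl; repeat split; auto. }
      exists (exist _ _ Hq); simpl; auto.
    - exists (inter (fun j : {q | P1 q} => snd (proj1_sig j)) l1,
              map (fun j : {q | P1 q} => fst (fst (proj1_sig j))) l1).
      split; [split|]; simpl.
      + apply inter_open; auto. intros [q Hq]; apply Hq.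
      + intros a w Ka Hw. destruct (Hl1 a Ka) as [j [Hj Vj]].
        exists (fst (fst (proj1_sig j))). split.
        * apply (in_map (fun j : {q | P1 q} => fst (fst (proj1_sig j)))); auto.
        * destruct j as [q Hq]; simpl in *. apply Hq; auto.
          rewrite inter_spec in Hw. apply (Hw _ Hj).
      + apply inter_spec. intros [q Hq] _; apply Hq. }
  destruct (HK {p | P2 p} (fun j => fst (proj1_sig j))) as [l2 Hl2].
  - intros [p Hp]; apply Hp.
  - intros b Kb. destruct (Hstep b Kb) as [p [Hp Hb]]. exists (exist _ p Hp); auto.
  - exists (flat_map (fun j : {p | P2 p} => snd (proj1_sig j)) l2).
    intros z [a [b [Ka [Kb ->]]]].
    destruct (Hl2 b Kb) as [[p Hp] [Hj Hpb]]; simpl in Hpb.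
    destruct (proj2 Hp a b Ka Hpb) as [i [Hi HUi]].
    exists i; split; auto. apply in_flat_map. exists (exist _ p Hp); auto.
Qed.

Lemma count_bound G add opp zero (open : (G -> Prop) -> Prop) K L :
  abelian_group_axioms G add opp zero ->
  topology_axioms G open -> add_continuous G add open -> opp_continuous G opp open ->
  compact_set G open K -> FLC G add opp open L ->
  exists N : nat, forall s l, NoDup l ->
    (forall x, In x l -> L x /\ translate G add s K x) -> (length l <= N)%nat.
Proof.
  intros Hax Ht Hadd Hopp HK HL.
  destruct (HL _ (diff_compact G add opp open K Ht Hadd Hopp HK)) as [m Hm].
  exists (length m). intros s [|x0 l'] Hnd Hin; [simpl; lia|].
  rewrite <- (length_map (fun y => add y (opp x0)) (x0 :: l')).
  apply NoDup_incl_length.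
  - apply FinFun.Injective_map_NoDup; auto.
    intros y y' H. eapply g_inj_sub; eauto.
  - intros z Hz. apply in_map_iff in Hz. destruct Hz as [y [<- Hy]].
    apply Hm. destruct (Hin y Hy) as [Ly [k1 [Kk1 Ey]]].
    destruct (Hin x0 (or_introl eq_refl)) as [Lx0 [k2 [Kk2 Ex0]]].
    split.
    + exists y, x0; auto.
    + exists k1, k2; split; [|split]; auto. rewrite Ey, Ex0. eapply g_diff; eauto.
Qed.

Definition Ssum {A} (f : A -> R) (l : list A) := fold_right Rplus 0 (map f l).

Lemma S_le {A} (f g : A -> R) l : (forall x, In x l -> f x <= g x) -> Ssum f l <= Ssum g l.
Proof.
  induction l as [|a l IH]; intros H; unfold Ssum in *; simpl; [lra|].
  apply Rplus_le_compat; [apply H; simpl; auto|]. apply IH; intros; apply H; simpl; auto.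
Qed.

Lemma S_add {A} (f g : A -> R) l : Ssum (fun x => f x + g x) l = Ssum f l + Ssum g l.
Proof. induction l; unfold Ssum in *; simpl; [lra|]. rewrite IHl; lra. Qed.

Lemma S_filter {A} (f : A -> R) p l :
  Ssum f l = Ssum f (filter p l) + Ssum f (filter (fun x => negb (p x)) l).
Proof.
  induction l as [|a l IH]; unfold Ssum in *; simpl; [lra|].
  destruct (p a); simpl; rewrite IH; lra.
Qed.

Lemma S_const {A} (f : A -> R) d l : (forall x, In x l -> f x <= d) ->
  Ssum f l <= d * INR (length l).
Proof.
  induction l as [|a l IH]; intros H; unfold Ssum in *; [simpl; lra|].
  cbn [length map fold_right]. rewrite S_INR. specialize (IH (fun x Hx => H x (or_intror Hx))).
  specialize (H a (or_introl eq_refl)). lra.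
Qed.

Lemma S_map {A B} (f : B -> R) (g : A -> B) l : Ssum f (map g l) = Ssum (fun x => f (g x)) l.
Proof. unfold Ssum; rewrite map_map; reflexivity. Qed.

Lemma len_filter_or {A} (a b : A -> bool) l :
  (length (filter (fun x => orb (a x) (b x)) l) <= length (filter a l) + length (filter b l))%nat.
Proof.
  induction l as [|x l IH]; simpl; [lia|].
  destruct (a x), (b x); simpl; lia.
Qed.

Theorem lemma13p6
  (G : Type) (add : G -> G -> G) (opp : G -> G) (zero : G)
  (open : (G -> Prop) -> Prop)
  (HG : sigma_compact_LCA_group G add opp zero open)
  (K : G -> Prop) (HKc : compact_set G open K)
  (HKi : nonempty_interior G open K)
  (w : G -> Cx)
  (Hw : weighted_comb G open w)
  (Hconc : concentrated G add opp open K w)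
  (Hinf : sup_norm_finite G w) :
  norm_almost_periodic G add opp open K w <-> sup_almost_periodic G add open w.
Proof.
  destruct HG as [Hax [Ht [_ [Hadd [Hopp _]]]]].
  split.
  - intros Hn eps Heps. destruct (Hn eps Heps) as [C [HC Hd]].
    exists C; split; auto. intros x. destruct (Hd x) as [s [c [Hs [Cc ->]]]].
    exists s, c; split; auto. destruct Hs as [c0 [Hc0 Htv]].
    exists c0; split; auto. intro x.
    destruct HKi as [U [k0 [_ [Uk0 HUK]]]].
    set (y := add s x).
    specialize (Htv (add y (opp k0)) [y] (ltac:(constructor; [simpl; tauto | constructor]))).
    assert (Hy : translate G add (add y (opp k0)) K y).
    { exists k0; split; auto. rewrite (gC G add opp zero Hax), (g_cancel2 G add opp zero Hax). reflexivity. }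
    assert (Hy' : forall z, In z [y] -> translate G add (add y (opp k0)) K z).
    { intros z Hz; destruct Hz as [Hz|[]]; subst z; exact Hy. }
    specialize (Htv Hy').
    simpl in Htv. unfold diff_translate in Htv.
    unfold y in *. rewrite (g_cancel G add opp zero Hax) in Htv. lra.
  - intros Hs eps Heps.
    destruct (Hconc (eps / 4)) as [L [HL [c [Hc Hctv]]]]; [lra|].
    destruct (count_bound G add opp zero open K L Hax Ht Hadd Hopp HKc HL) as [N HN].
    set (n := INR N). assert (Hn0 : 0 <= n) by apply pos_INR.
    set (dl := eps / (4 * (n + 1))).
    assert (Hdl : dl * (4 * (n + 1)) = eps) by (unfold dl; field; lra).
    assert (Hdl0 : 0 < dl) by (unfold dl; apply Rdiv_lt_0_compat; lra).
    destruct (Hs dl Hdl0) as [C [HC Hd]].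
    exists C; split; auto. intros x. destruct (Hd x) as [t [c1 [Ht' [Cc ->]]]].
    exists t, c1; split; auto. destruct Ht' as [c' [Hc' Hsup]].
    assert (Hc0 : 0 <= c).
    { specialize (Hctv zero [] (NoDup_nil _) (fun x H => match H with end)). simpl in Hctv. lra. }
    assert (Hc'0 : 0 <= c').
    { specialize (Hsup zero). pose proof (Cmod_ge0 (Cminus (w (add t zero)) (w zero))). lra. }
    exists (c' * (2 * n) + 2 * c). split.
    { assert (c' * (2 * n) <= dl * (2 * n)) by (apply Rmult_le_compat_r; lra). nra. }
    intros s l Hnd Hin.
    set (pL := fun x => if excluded_middle_informative (L x) then true else false).
    set (pLt := fun x => pL (add x (opp t))).
    set (p := fun x => orb (pL x) (pLt x)).
    set (d := fun x => Cmod (diff_translate G add opp w t x)).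
    change (Ssum d l <= c' * (2 * n) + 2 * c).
    rewrite (S_filter d p l).
    assert (HpL : forall x, pL x = true -> L x).
    { intros x; unfold pL; destruct (excluded_middle_informative (L x)); congruence. }
    assert (HpLf : forall x, pL x = false -> ~ L x).
    { intros x; unfold pL; destruct (excluded_middle_informative (L x)); congruence. }
    assert (Htr : forall x, translate G add s K x ->
        translate G add (add s (opp t)) K (add x (opp t))).
    { intros x [k [Kk ->]]. exists k; split; auto. apply (g_shift G add opp zero Hax). }
    assert (Hinj : Injective (fun x => add x (opp t))).
    { intros y y' H. eapply g_inj_sub; eauto. }
    apply Rplus_le_compat.
    + apply Rle_trans with (c' * INR (length (filter p l))).
      * apply S_const. intros x _. unfold d, diff_translate.
        specialize (Hsup (add x (opp t))).
        rewrite (g_cancel2 G add opp zero Hax) in Hsup. exact Hsup.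
      * apply Rmult_le_compat_l; auto. unfold n.
        replace (2 * INR N) with (INR (N + N)) by (rewrite plus_INR; lra).
        apply le_INR. eapply Nat.le_trans; [apply len_filter_or|].
        apply Nat.add_le_mono.
        -- apply (HN s); [apply NoDup_filter; auto|].
           intros x Hx. apply filter_In in Hx. destruct Hx as [Hx Hpx].
           split; [apply HpL; exact Hpx | apply Hin; exact Hx].
        -- rewrite <- (length_map (fun x => add x (opp t))).
           apply (HN (add s (opp t))).
           ++ apply Injective_map_NoDup; auto. apply NoDup_filter; auto.
           ++ intros z Hz. apply in_map_iff in Hz. destruct Hz as [x [<- Hx]].
              apply filter_In in Hx. destruct Hx as [Hx Hpx].
              split; [apply HpL; exact Hpx | apply Htr; apply Hin; exact Hx].
    + set (l2 := filter (fun x => negb (p x)) l).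
      assert (Hl2 : forall x, In x l2 -> translate G add s K x /\ ~ L x /\ ~ L (add x (opp t))).
      { intros x Hx. apply filter_In in Hx. destruct Hx as [Hx Hpx].
        unfold p, pLt in Hpx.
        destruct (pL x) eqn:E1; [discriminate|].
        destruct (pL (add x (opp t))) eqn:E2; [discriminate|].
        repeat split; auto. }
      assert (Hnd2 : NoDup l2) by (apply NoDup_filter; auto).
      apply Rle_trans with (Ssum (fun x => Cmod (w x) + Cmod (w (add x (opp t)))) l2).
      { apply S_le. intros x _. apply Cmod_tri. }
      rewrite S_add. replace (2 * c) with (c + c) by ring. apply Rplus_le_compat.
      * apply (Hctv s l2 Hnd2). intros x Hx. destruct (Hl2 x Hx) as [A [B _]]; auto.
      * rewrite <- (S_map (fun x => Cmod (w x)) (fun x => add x (opp t))).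
        apply (Hctv (add s (opp t))).
        -- apply Injective_map_NoDup; auto.
        -- intros z Hz. apply in_map_iff in Hz. destruct Hz as [x [<- Hx]].
           destruct (Hl2 x Hx) as [A [_ B]]. split; auto.
Qed.
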